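(* Let $L$ be recognized by a parity automaton with costs $\mathcal{A}$ over an alphabet $\Sigma_I\times\Sigma_O$ with $n$ states and $k$ colors. If Player $O$ wins $\Gamma_f(L)$ for some delay function $f$, then she also wins $\Gamma_f(L)$ for the constant delay function $f$ with $f(0)=2^{2n^4k^2+1}$.
   Context: A parity automaton with costs is a tuple $\mathcal{A}=(Q,\Sigma,q_I,\delta,\Omega,\mathrm{Cst})$ with a finite set $Q$ of states, a finite alphabet $\Sigma$, an initial state $q_I$, a deterministic complete transition function $\delta\colon Q\times\Sigma\to Q$, a coloring $\Omega\colon Q\to\mathbb{N}$, and a cost function $\mathrm{Cst}$ assigning to every transition $(q,a,\delta(q,a))$ either $\epsilon$ or $\mathtt{i}$ (increment-transition). Throughout, $\Omega(Q)$ contains both an even and an odd color; the number of colors is $|\Omega(Q)|$. The run on $a_0a_1\cdots$ is $(q_0,a_0,q_1)(q_1,a_1,q_2)\cdots$ with $q_0=q_I$, $q_{j+1}=\delta(q_j,a_j)$; the cost of a finite run is its number of increment-transitions. For odd $c$, $\mathrm{Ans}(c)=\{c'\in\Omega(Q)\mid c'>c,\ c'\text{ even}\}$. For an infinite run $\rho$ and $n$, $\mathrm{Cor}(\rho,n)=0$ if $\Omega(q_n)$ is even, and otherwise it is the minimal cost of $(q_n,a_n,q_{n+1})\cdots(q_{n'-1},a_{n'-1},q_{n'})$ over $n'>n$ with $\Omega(q_{n'})\in\mathrm{Ans}(\Omega(q_n))$ ($\min\emptyset=\infty$). The run is accepting if $\limsup_n\mathrm{Cor}(\rho,n)<\infty$;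 $L(\mathcal{A})$ is the set of infinite words whose run is accepting. A delay function is a map $f\colon\mathbb{N}\to\mathbb{N}\setminus\{0\}$; it is constant if $f(i)=1$ for every $i>0$. For $L\subseteq(\Sigma_I\times\Sigma_O)^\omega$, the delay game $\Gamma_f(L)$ is played in rounds $i=0,1,2,\ldots$: in round $i$, Player $I$ picks $u_i\in\Sigma_I^{f(i)}$, then Player $O$ picks $v_i\in\Sigma_O$. Player $O$ wins the play if the outcome, i.e., the word over $\Sigma_I\times\Sigma_O$ pairing $u_0u_1u_2\cdots$ and $v_0v_1v_2\cdots$ letterwise, is in $L$; otherwise Player $I$ wins. A strategy for Player $I$ is a map $\tau_I\colon\Sigma_O^*\to\Sigma_I^*$ with $|\tau_I(w)|=f(|w|)$; a strategy for Player $O$ is a map $\tau_O\colon\Sigma_I^*\to\Sigma_O$. A play is consistent with $\tau_I$ if $u_i=\tau_I(v_0\cdots v_{i-1})$ for all $i$, and with $\tau_O$ if $v_i=\tau_O(u_0\cdots u_i)$ for all $i$. A strategy is winning if every consistent play is won by its owner; a player wins the game if she has a winning strategy. *)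

(* Defs.v *)
From mathcomp Require Import all_boot.
Set Implicit Arguments. Unset Strict Implicit. Unset Printing Implicit Defensive.

(* Parity automaton with costs over alphabet Sigma, with state set Q.
   cst q a = true iff the transition (q, a, delta q a) is an increment-transition. *)
Record pac (Q Sigma : finType) := Pac {
  qI : Q;
  delta : Q -> Sigma -> Q;
  Omega : Q -> nat;
  cst : Q -> Sigma -> bool
}.

Section Auto.
Variables (Q Sigma : finType) (A : pac Q Sigma).

Definition nstates := #|Q|.
Definition ncolors := size (undup [seq Omega A q | q <- enum Q]).

Definition has_even_and_odd_color :=
  (exists q, odd (Omega A q)) /\ (exists q, ~~ odd (Omega A q)).

Fixpoint run_state (w : nat -> Sigma) (n : nat) : Q :=
  match n with
  | 0 => qI A
  | n'.+1 => delta A (run_state w n') (w n')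
  end.

Definition seg_cost (w : nat -> Sigma) (n n' : nat) : nat :=
  \sum_(n <= j < n') (cst A (run_state w j) (w j) : nat).

(* Cor(rho, n) <= b  (with min over the empty set = infinity) *)
Definition cor_le (w : nat -> Sigma) (n b : nat) : Prop :=
  ~~ odd (Omega A (run_state w n)) \/
  exists n', [/\ n < n', ~~ odd (Omega A (run_state w n')),
                 Omega A (run_state w n) < Omega A (run_state w n')
               & seg_cost w n n' <= b].

(* limsup_n Cor(rho, n) < infinity *)
Definition accepting (w : nat -> Sigma) : Prop :=
  exists b N, forall n, N <= n -> cor_le w n b.

Definition lang : (nat -> Sigma) -> Prop := accepting.
End Auto.

Definition delay_fun (f : nat -> nat) : Prop := forall i, 0 < f i.
Definition constant_delay (f : nat -> nat) : Prop := forall i, 0 < i -> f i = 1.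

Section Game.
Variables (SI SO : finType).

(* w is the outcome of the play (u_i, v_i)_i : the word pairing u_0 u_1 ... with
   v_0 v_1 ... letterwise.  (The first j+1 blocks contain at least j+1 letters,
   since every block is nonempty; the default of nth is irrelevant.) *)
Definition outcome (u : nat -> seq SI) (v : nat -> SO) (w : nat -> SI * SO) : Prop :=
  forall j, (w j).2 = v j /\
            (w j).1 = nth (w j).1 (flatten [seq u l | l <- iota 0 j.+1]) j.

Definition winsO (f : nat -> nat) (L : (nat -> SI * SO) -> Prop) : Prop :=
  exists tauO : seq SI -> SO,
    forall (u : nat -> seq SI) (v : nat -> SO),
      (forall i, size (u i) = f i) ->
      (forall i, v i = tauO (flatten [seq u l | l <- iota 0 i.+1])) ->
      forall w, outcome u v w -> L w.
End Game.

(* Main.v *)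
Require Import Defs.
From mathcomp Require Import all_boot zify.
From Stdlib Require Import ClassicalEpsilon.
Set Implicit Arguments. Unset Strict Implicit. Unset Printing Implicit Defensive.

Notation Summ Q := (Q * bool * option Q * option Q)%type.
Section Sem.
Variables (Sig Q : finType) (A : pac Q Sig).
Local Notation Om := (Omega A).


Definition init (q : Q) : Summ Q := (q, false, None, None).
Definition upd (s : Summ Q) (a : Sig) : Summ Q :=
  let: (q, inc, P, E) := s in
  let c := Om q in
  (delta A q a, inc || cst A q a,
   if odd c then (if P is Some p then (if c < Om p then Some p else Some q) else Some q)
   else (if P is Some p then (if Om p < c then None else Some p) else None),
   if odd c then E else (if E is Some e then (if c < Om e then Some e else Some q) else Some q)).

Definition sq (s : Summ Q) := s.1.1.1.
Definition sinc (s : Summ Q) := s.1.1.2.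
Definition sP (s : Summ Q) := s.1.2.
Definition sE (s : Summ Q) := s.2.

Variable w : nat -> Sig.
Local Notation rs := (run_state A w).

Definition blk a d := foldl upd (init (rs a)) [seq w t | t <- iota a d].

Lemma blkS a d : blk a d.+1 = upd (blk a d) (w (a + d)).
Proof. by rewrite /blk -addn1 iotaD map_cat foldl_cat /=. Qed.

Lemma sem1 a d : sq (blk a d) = rs (a + d).
Proof.
elim: d => [|d IH]; first by rewrite addn0.
rewrite blkS addnS /=.
move: IH; case: (blk a d) => [[[q inc] P] E]; rewrite /sq /= => <-.
by [].
Qed.

Lemma sem2 a d : sinc (blk a d) = (0 < seg_cost A w a (a + d)).
Proof.
elim: d => [|d IH]; first by rewrite addn0 /seg_cost big_geq.
rewrite blkS addnS /seg_cost big_nat_recr /= ?leq_addr //.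
have := sem1 a d; move: IH; rewrite /seg_cost.
case: (blk a d) => [[[q inc] P] E] /=; rewrite /sinc /sq /= => -> ->.
by case: (cst A _ _); rewrite ?addn1 ?addn0 ?orbT ?orbF.
Qed.

Lemma semE a d :
  (forall e, sE (blk a d) = Some e ->
     exists t, [/\ a <= t < a + d, Om (rs t) = Om e & ~~ odd (Om e)]) /\
  (forall t, a <= t < a + d -> ~~ odd (Om (rs t)) ->
     exists e, sE (blk a d) = Some e /\ Om (rs t) <= Om e).
Proof.
elim: d => [|d [IH1 IH2]].
  by split=> [e|t]; rewrite /blk /= /sE //= addn0; lia.
have := sem1 a d; rewrite blkS.
move: IH1 IH2; case: (blk a d) => [[[q inc] P] E]; rewrite /sE /sq /= => IH1 IH2 Hq.
subst q; split.
- move=> e He.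
  case Ho: (odd (Om (rs (a + d)))); rewrite Ho in He.
    have [t [Ht1 Ht2 Ht3]] := IH1 e He; exists t; split => //; lia.
  case: E He IH1 IH2 => [e0|] He IH1 IH2.
    case: ifP He => Hc [<-].
      have [t [Ht1 Ht2 Ht3]] := IH1 e0 erefl; exists t; split => //; lia.
    exists (a + d); split => //; lia.
  case: He => <-; exists (a + d); split => //; lia.
- move=> t Ht Hte.
  case: (ltnP t (a + d)) => Htd.
    have [e [He1 He2]] := IH2 t (ltac:(lia)) Hte.
    case Ho: (odd (Om (rs (a + d)))).
      by exists e.
    rewrite He1; case: ifP => Hc; [exists e | exists (rs (a + d))]; split => //; lia.
  have Et : t = a + d by lia.
  rewrite Et in Hte *.
  rewrite (negbTE Hte).
  case: E IH1 IH2 => [e0|] IH1 IH2.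
    case: ifP => Hc; [exists e0 | exists (rs (a + d))]; split => //; lia.
  by exists (rs (a + d)).
Qed.

Lemma semP a d :
  (forall p, sP (blk a d) = Some p ->
     exists t, [/\ a <= t < a + d, Om (rs t) = Om p, odd (Om p) &
       forall t', t < t' < a + d -> ~~ odd (Om (rs t')) -> Om (rs t') <= Om p]) /\
  (forall t, a <= t < a + d -> odd (Om (rs t)) ->
     (exists t', [/\ t < t' < a + d, ~~ odd (Om (rs t')) & Om (rs t) < Om (rs t')]) \/
     exists p, sP (blk a d) = Some p /\ Om (rs t) <= Om p).
Proof.
elim: d => [|d [IH1 IH2]].
  by split=> [e|t]; rewrite /blk /= /sP //= addn0; lia.
have := sem1 a d; rewrite blkS.
move: IH1 IH2; case: (blk a d) => [[[q inc] P] E]; rewrite /sP /sq /= => IH1 IH2 Hq.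
subst q; split.
- move=> p Hp.
  case Ho: (odd (Om (rs (a + d)))); rewrite Ho in Hp.
    case: P Hp IH1 IH2 => [p0|] Hp IH1 IH2.
      case: ifP Hp => Hc [<-].
        have [t [Ht1 Ht2 Ht3 Ht4]] := IH1 p0 erefl; exists t; split => //; first lia.
        move=> t' Ht'; case: (ltnP t' (a + d)) => H'.
          by apply: Ht4; lia.
        have -> : t' = a + d by lia.
        by rewrite Ho.
      exists (a + d); split => //; first lia.
      by move=> t'; lia.
    case: Hp => <-; exists (a + d); split => //; first lia.
    by move=> t'; lia.
  case: P Hp IH1 IH2 => [p0|] Hp IH1 IH2 //.
  case: ifP Hp => Hc // [<-].
  have [t [Ht1 Ht2 Ht3 Ht4]] := IH1 p0 erefl; exists t; split => //; first lia.
  move=> t' Ht'; case: (ltnP t' (a + d)) => H'.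
    by apply: Ht4; lia.
  have -> : t' = a + d by lia.
  move=> _; move/negbT: Hc; rewrite -leqNgt //.
- move=> t Ht Hto.
  case: (ltnP t (a + d)) => Htd.
    case: (IH2 t (ltac:(lia)) Hto) => [[t' [Ht'1 Ht'2 Ht'3]]|[p [Hp1 Hp2]]].
      by left; exists t'; split => //; lia.
    rewrite Hp1.
    case Ho: (odd (Om (rs (a + d)))).
      right; case: ifP => Hc; [exists p | exists (rs (a + d))]; split => //; lia.
    case: ifP => Hc.
      left; exists (a + d); split => //; lia.
    right; exists p; split => //.
  have Et : t = a + d by lia.
  rewrite Et in Hto *.
  rewrite Hto; right.
  case: P IH1 IH2 => [p0|] IH1 IH2.
    case: ifP => Hc; [exists p0 | exists (rs (a + d))]; split => //; lia.
  by exists (rs (a + d)).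
Qed.

End Sem.

Section Cls.
Variables (SI SO Q : finType) (A : pac Q (SI * SO)%type).

Definition cls (x : seq SI) : {set Q * Summ Q} :=
  [set p | [exists t : (size x).-tuple SO, foldl (upd A) (init p.1) (zip x t) == p.2]].

Lemma clsP x p : p \in cls x <->
  exists al : seq SO, size al = size x /\ foldl (upd A) (init p.1) (zip x al) = p.2.
Proof.
rewrite inE; split.
  by case/existsP => t /eqP H; exists (val t); rewrite size_tuple.
move=> [al [Hs H]]; apply/existsP.
have Hs' : size al == size x by apply/eqP.
by exists (Tuple Hs'); apply/eqP.
Qed.

Lemma clsCatP x z p : p \in cls (x ++ z) <->
  exists s1, (p.1, s1) \in cls x /\
    exists al2 : seq SO, size al2 = size z /\ foldl (upd A) s1 (zip z al2) = p.2.
Proof.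
split.
  move/clsP => [al [Hs H]].
  exists (foldl (upd A) (init p.1) (zip x (take (size x) al))); split.
    apply/clsP; exists (take (size x) al); split => //.
    by rewrite size_takel // Hs size_cat leq_addr.
  exists (drop (size x) al); split.
    by rewrite size_drop Hs size_cat addKn.
  rewrite -foldl_cat -zip_cat ?cat_take_drop //.
  by rewrite size_takel // Hs size_cat leq_addr.
move=> [s1 [/clsP [al1 [Hs1 H1]] [al2 [Hs2 H2]]]].
apply/clsP; exists (al1 ++ al2); split; first by rewrite !size_cat Hs1 Hs2.
by rewrite zip_cat // foldl_cat H1.
Qed.

Lemma cls_cong x x' z : cls x = cls x' -> cls (x ++ z) = cls (x' ++ z).
Proof.
move=> E; apply/setP => p; apply/idP/idP.
  move/clsCatP => [s1 [H1 H2]]; apply/clsCatP; exists s1; split => //; by rewrite -E.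
move/clsCatP => [s1 [H1 H2]]; apply/clsCatP; exists s1; split => //; by rewrite E.
Qed.

Lemma size_flatten_nseq (T : Type) k (b : seq T) : size (flatten (nseq k b)) = k * size b.
Proof. by elim: k => [|k IH] //=; rewrite size_cat IH mulSn. Qed.

Lemma pump_aux x j1 j2 : j1 < j2 <= size x -> cls (take j1 x) = cls (take j2 x) ->
  forall N, exists y, cls y = cls x /\ N <= size y.
Proof.
move=> /andP [H12 H2x] E N.
set a := take j1 x; set b := take (j2 - j1) (drop j1 x); set c := drop j2 x.
have Ej2 : take j2 x = a ++ b by rewrite /a /b -takeD subnKC // ltnW.
have Hx : x = (a ++ b) ++ c by rewrite -Ej2 /c cat_take_drop.
have Hab : cls (a ++ b) = cls a by rewrite -Ej2 E.
have Hk : forall k, cls (a ++ flatten (nseq k b)) = cls a.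
  elim=> [|k IH]; first by rewrite cats0.
  by rewrite /= catA (cls_cong _ Hab).
exists ((a ++ flatten (nseq N b)) ++ c); split.
  by rewrite (cls_cong _ (Hk N)) [in RHS]Hx (cls_cong _ Hab).
rewrite !size_cat size_flatten_nseq.
have : 0 < size b by rewrite /b size_take size_drop; case: ifP => _; lia.
move=> Hb; have := leq_pmulr N Hb; lia.
Qed.

Lemma pump x : #|{set Q * Summ Q}| <= size x ->
  forall N, exists y, cls y = cls x /\ N <= size y.
Proof.
move=> Hc.
pose f := fun j : 'I_(size x).+1 => cls (take j x).
have /injectivePn [j1 [j2 Hne Hf]] : ~~ injectiveb f.
  apply/negP => /injectiveP /leq_card; rewrite card_ord => H.
  by have := leq_trans H Hc; rewrite ltnn.
have := ltn_ord j1; have := ltn_ord j2; rewrite !ltnS => H1 H2.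
case: (ltngtP j1 j2) => Hlt.
- by apply: (pump_aux (j1:=j1) (j2:=j2)) => //; rewrite Hlt.
- by apply: (pump_aux (j1:=j2) (j2:=j1)) => //; rewrite Hlt.
- by move: Hne; rewrite (val_inj Hlt) eqxx.
Qed.

Lemma card_cls : #|{set Q * Summ Q}| = 2 ^ (#|Q| * (#|Q| * 2 * #|Q|.+1 * #|Q|.+1)).
Proof.
have := card_powerset [set: Q * Summ Q]; rewrite powersetT !cardsT => ->.
by rewrite !card_prod card_bool !card_option.
Qed.

End Cls.

Section Main.
Variables (SI SO Q : finType) (A : pac Q (SI * SO)%type).
Variables (tau : seq SI -> SO) (f : nat -> nat) (l : nat).

Definition Fprev n := \sum_(t < n) f t.

Definition pickw (x : seq SI) (N : nat) : seq SI :=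
  epsilon (inhabits x) (fun y => cls A y = cls A x /\ N <= size y).

Fixpoint ys (B : nat -> seq SI) (k : nat) : seq (seq SI) :=
  if k is k'.+1 then
    rcons (ys B k') (pickw (B k) (Fprev (size (flatten (ys B k')))).+1)
  else [:: B 0].

Definition yb B i := nth [::] (ys B i) i.
Definition Ypos B n := size (flatten [seq yb B t | t <- iota 0 n]).

Definition simw (x0 : SI) (L : seq SI) p := (nth x0 L p, tau (take (Fprev p.+1) L)).

Definition alpha B x0 i :=
  let L := flatten (ys B i.+1) in
  let q := foldl (delta A) (qI A) [seq simw x0 L p | p <- iota 0 (Ypos B i)] in
  let tgt := foldl (upd A) (init q) [seq simw x0 L p | p <- iota (Ypos B i) (size (yb B i))] in
  epsilon (inhabits [::]) (fun al : seq SO =>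
    size al = size (B i) /\ foldl (upd A) (init q) (zip (B i) al) = tgt).

Definition sb (s : seq SI) t := take l (drop (t * l) s).

Definition sigma (s : seq SI) : SO :=
  if s is x0 :: _ then
    let j := size s - 2 * l in nth (tau [::]) (alpha (sb s) x0 (j %/ l)) (j %% l)
  else tau [::].

Lemma ys_size B k : size (ys B k) = k.+1.
Proof. by elim: k => [|k IH] //=; rewrite size_rcons IH. Qed.

Lemma ys_S B k : ys B k.+1 = rcons (ys B k) (yb B k.+1).
Proof. by rewrite /yb {2}/ys -/ys nth_rcons ys_size ltnn eqxx. Qed.

Lemma ys_map B k : ys B k = [seq yb B t | t <- iota 0 k.+1].
Proof.
elim: k => [|k IH]; first by [].
rewrite ys_S IH (_ : k.+2 = k.+1 + 1); last by rewrite addn1.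
by rewrite iotaD map_cat cats1.
Qed.

Lemma YposS B n : Ypos B n.+1 = Ypos B n + size (yb B n).
Proof.
rewrite /Ypos (_ : n.+1 = n + 1); last by rewrite addn1.
by rewrite iotaD map_cat flatten_cat size_cat /= cats0.
Qed.

Lemma size_flat_ys B k : size (flatten (ys B k)) = Ypos B k.+1.
Proof. by rewrite ys_map. Qed.

Lemma ys_ext B B' k : (forall t, t <= k -> B t = B' t) -> ys B k = ys B' k.
Proof.
elim: k => [|k IH] H /=; first by rewrite H.
by rewrite IH ?H // => t Ht; apply: H; apply: leq_trans Ht _.
Qed.

Lemma yb_ext B B' k : (forall t, t <= k -> B t = B' t) -> yb B k = yb B' k.
Proof. by move=> H; rewrite /yb (ys_ext H). Qed.

Lemma Ypos_ext B B' k : (forall t, t <= k -> B t = B' t) -> Ypos B k = Ypos B' k.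
Proof.
move=> H; rewrite /Ypos; congr (size (flatten _)); apply/eq_in_map => t.
rewrite mem_iota => /andP [_ Ht]; apply: yb_ext => t' Ht'; apply: H; lia.
Qed.

Lemma alpha_ext B B' x0 i : (forall t, t <= i.+1 -> B t = B' t) -> alpha B x0 i = alpha B' x0 i.
Proof.
move=> H.
have H' : forall t, t <= i -> B t = B' t by move=> t Ht; apply: H; apply: leq_trans Ht _.
by rewrite /alpha (ys_ext H) (Ypos_ext H') (yb_ext H') H.
Qed.

End Main.

Section Main2.
Variables (SI SO Q : finType) (A : pac Q (SI * SO)%type).
Variables (tau : seq SI -> SO) (f : nat -> nat) (l : nat).
Hypothesis Hf : delay_fun f.
Hypothesis Hl : #|{set Q * Summ Q}| <= l.
Hypothesis Hl0 : 0 < l.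

Local Notation ys := (ys A f).
Local Notation yb := (yb A f).
Local Notation Ypos := (Ypos A f).
Local Notation Fprev := (Fprev f).

Lemma FprevS n : Fprev n.+1 = Fprev n + f n.
Proof. by rewrite /Fprev big_ord_recr. Qed.

Lemma Fprev_mono m n : m <= n -> Fprev m <= Fprev n.
Proof.
elim: n => [|n IH]; first by rewrite leqn0 => /eqP ->.
rewrite leq_eqVlt => /orP [/eqP ->|H] //.
by rewrite FprevS; apply: leq_trans (IH H) (leq_addr _ _).
Qed.

Lemma Fprev_ge n : n <= Fprev n.
Proof. elim: n => [|n IH] //; rewrite FprevS; have := Hf n; lia. Qed.

Variable B : nat -> seq SI.
Hypothesis HB : forall t, size (B t) = l.

Lemma yb_spec t : cls A (yb B t) = cls A (B t) /\
  (0 < t -> (Fprev (Ypos B t)).+1 <= size (yb B t)).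
Proof.
case: t => [|k]; first by [].
have -> : yb B k.+1 = pickw A (B k.+1) (Fprev (size (flatten (ys B k)))).+1.
  by rewrite /yb /= nth_rcons ys_size ltnn eqxx.
rewrite size_flat_ys /pickw.
have [] := epsilon_spec (inhabits (B k.+1))
   (fun y => cls A y = cls A (B k.+1) /\ (Fprev (Ypos B k.+1)).+1 <= size y).
  by apply: pump; rewrite HB.
by move=> -> H; split.
Qed.

Lemma yb_pos t : 0 < size (yb B t).
Proof.
case: t => [|k]; first by rewrite /yb /= HB.
by have [_ H] := yb_spec k.+1; apply: leq_trans (H _).
Qed.

Lemma Ypos_lt n : Ypos B n < Ypos B n.+1.
Proof. by rewrite YposS -{1}(addn0 (Ypos B n)) ltn_add2l yb_pos. Qed.

Lemma Ypos_ge n : n <= Ypos B n.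
Proof. elim: n => [|n IH] //; apply: leq_ltn_trans IH (Ypos_lt n). Qed.

Lemma Ypos_mono m n : m <= n -> Ypos B m <= Ypos B n.
Proof.
elim: n => [|n IH]; first by rewrite leqn0 => /eqP ->.
rewrite leq_eqVlt => /orP [/eqP ->|H] //.
by apply: leq_trans (IH H) (ltnW (Ypos_lt n)).
Qed.

Lemma Ypos_block p : exists i, Ypos B i <= p < Ypos B i.+1.
Proof.
elim: p => [|p [i /andP [H1 H2]]].
  by exists 0; apply/andP; split => //; exact: (Ypos_lt 0).
case: (ltngtP p.+1 (Ypos B i.+1)) => H.
- by exists i; rewrite H andbT; apply: leq_trans H1 _.
- by lia.
- by exists i.+1; rewrite H leqnn Ypos_lt.
Qed.

Lemma Ypos0 : Ypos B 0 = 0.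
Proof. by []. Qed.

Lemma flat_ys_prefix k k' : k <= k' -> exists r, flatten (ys B k') = flatten (ys B k) ++ r.
Proof.
move=> H; rewrite !ys_map (_ : k'.+1 = k.+1 + (k' - k)); last by lia.
by rewrite iotaD map_cat flatten_cat; eexists.
Qed.

Definition Yw x0 p := nth x0 (flatten (ys B p)) p.

Lemma Yw_nth x0 k p : p < size (flatten (ys B k)) -> nth x0 (flatten (ys B k)) p = Yw x0 p.
Proof.
move=> Hp; rewrite /Yw.
have Hpp : p < size (flatten (ys B p)).
  by rewrite size_flat_ys; apply: leq_trans (Ypos_ge p.+1).
case: (leqP k p) => H.
  by have [r ->] := flat_ys_prefix H; rewrite nth_cat Hp.
by have [r ->] := flat_ys_prefix (ltnW H); rewrite nth_cat Hpp.
Qed.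

Lemma take_ys x0 k n : n <= size (flatten (ys B k)) ->
  take n (flatten (ys B k)) = mkseq (Yw x0) n.
Proof.
move=> Hn; apply: (@eq_from_nth _ x0); first by rewrite size_takel // size_mkseq.
move=> i; rewrite size_takel // => Hi.
by rewrite nth_take // nth_mkseq // Yw_nth //; apply: leq_trans Hn.
Qed.

Lemma Yw_block x0 i r : r < size (yb B i) -> Yw x0 (Ypos B i + r) = nth x0 (yb B i) r.
Proof.
move=> Hr; rewrite -(Yw_nth x0 (k:=i)); last by rewrite size_flat_ys YposS ltn_add2l.
rewrite ys_map (_ : i.+1 = i + 1); last by rewrite addn1.
rewrite iotaD map_cat flatten_cat /= cats0 nth_cat.
by rewrite -/(Ypos B i) ltnNge leq_addr /= addKn.
Qed.

Definition Ww x0 p := (Yw x0 p, tau (mkseq (Yw x0) (Fprev p.+1))).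

Lemma simw_W x0 i p : p < Ypos B i.+1 ->
  simw tau f x0 (flatten (ys B i.+1)) p = Ww x0 p.
Proof.
move=> Hp; rewrite /simw /Ww.
have Hsz : size (flatten (ys B i.+1)) = Ypos B i.+2 by rewrite size_flat_ys.
rewrite Yw_nth; last by rewrite Hsz; apply: leq_trans Hp (ltnW (Ypos_lt _)).
rewrite (take_ys x0) //.
rewrite Hsz YposS; have [_ H] := yb_spec i.+1.
apply: leq_trans (leq_addl _ _); apply: leq_trans (H erefl).
by apply: leq_trans (leqnSn _); apply: Fprev_mono.
Qed.

Lemma flat_u x0 n :
  flatten [seq [seq Yw x0 p | p <- iota (Fprev t) (f t)] | t <- iota 0 n] = mkseq (Yw x0) (Fprev n).
Proof.
elim: n => [|n IH]; first by rewrite /Fprev big_ord0.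
rewrite (_ : n.+1 = n + 1); last by rewrite addn1.
rewrite iotaD map_cat flatten_cat IH /= cats0 addn1 FprevS /mkseq iotaD map_cat.
by [].
Qed.

Lemma W_lang x0 :
  (forall (u : nat -> seq SI) (v : nat -> SO),
      (forall i, size (u i) = f i) ->
      (forall i, v i = tau (flatten [seq u l | l <- iota 0 i.+1])) ->
      forall w, outcome u v w -> lang A w) ->
  lang A (Ww x0).
Proof.
move=> Hwin.
apply: (Hwin (fun t => [seq Yw x0 p | p <- iota (Fprev t) (f t)])
             (fun i => tau (mkseq (Yw x0) (Fprev i.+1)))).
- by move=> i; rewrite size_map size_iota.
- by move=> i; rewrite -flat_u.
- move=> j; split; first by [].
  rewrite (_ : flatten _ = mkseq (Yw x0) (Fprev j.+1)); last by rewrite -flat_u.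
  by rewrite nth_mkseq //; apply: Fprev_ge.
Qed.

Lemma rs_foldl (w' : nat -> SI * SO) n :
  run_state A w' n = foldl (delta A) (qI A) [seq w' t | t <- iota 0 n].
Proof.
elim: n => [|n IH] //.
have -> : iota 0 n.+1 = iota 0 n ++ [:: n] by rewrite -addn1 iotaD.
by rewrite map_cat foldl_cat -IH.
Qed.

Lemma alpha_spec x0 i :
  size (alpha A tau f B x0 i) = l /\
  foldl (upd A) (init (run_state A (Ww x0) (Ypos B i))) (zip (B i) (alpha A tau f B x0 i))
    = blk A (Ww x0) (Ypos B i) (size (yb B i)).
Proof.
have Hlt : Ypos B i + size (yb B i) = Ypos B i.+1 by rewrite YposS.
have Eq : foldl (delta A) (qI A)
    [seq simw tau f x0 (flatten (ys B i.+1)) p | p <- iota 0 (Ypos B i)]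
    = run_state A (Ww x0) (Ypos B i).
  rewrite rs_foldl; congr foldl; apply/eq_in_map => p; rewrite mem_iota => /andP [_ Hp].
  by apply: simw_W; apply: leq_trans Hp (ltnW (Ypos_lt _)).
have Et : foldl (upd A) (init (run_state A (Ww x0) (Ypos B i)))
    [seq simw tau f x0 (flatten (ys B i.+1)) p | p <- iota (Ypos B i) (size (yb B i))]
    = blk A (Ww x0) (Ypos B i) (size (yb B i)).
  rewrite /blk; congr foldl; apply/eq_in_map => p; rewrite mem_iota => /andP [_ Hp].
  by apply: simw_W; rewrite -Hlt.
rewrite /alpha Eq Et.
set tgt := blk A (Ww x0) (Ypos B i) (size (yb B i)).
set q := run_state A (Ww x0) (Ypos B i).
have Hin : (q, tgt) \in cls A (yb B i).
  apply/clsP; exists [seq (Ww x0 p).2 | p <- iota (Ypos B i) (size (yb B i))].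
  split; first by rewrite size_map size_iota.
  rewrite /tgt /blk /=; congr foldl.
  apply: (@eq_from_nth _ (Ww x0 0)); first by rewrite size_zip !size_map size_iota minnn.
  move=> r; rewrite size_zip size_map size_iota minnn => Hr.
  rewrite nth_zip ?size_map ?size_iota // (nth_map 0) ?size_iota // nth_iota //.
  rewrite (nth_map 0) ?size_iota // nth_iota // /Ww /=.
  by rewrite Yw_block // (set_nth_default (Yw x0 0)).
have [E _] := yb_spec i; rewrite E in Hin.
have /clsP [al [Hs Hal]] := Hin.
have [] := epsilon_spec (inhabits [::]) (fun al : seq SO =>
    size al = size (B i) /\ foldl (upd A) (init q) (zip (B i) al) = tgt).
  by exists al.
by rewrite HB => -> ->.
Qed.

End Main2.

Section SegLemmas.
Variables (Sig Q : finType) (A : pac Q Sig) (w : nat -> Sig).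

Lemma seg_split a b c : a <= b -> b <= c -> seg_cost A w a c = seg_cost A w a b + seg_cost A w b c.
Proof. by move=> H1 H2; rewrite /seg_cost -big_cat_nat. Qed.

Lemma seg_mono a b a' b' : a' <= a -> a <= b -> b <= b' -> seg_cost A w a b <= seg_cost A w a' b'.
Proof.
move=> H1 H2 H3.
rewrite (seg_split H1 (leq_trans H2 H3)) (seg_split H2 H3); lia.
Qed.

Lemma seg_le a b : seg_cost A w a b <= b - a.
Proof.
rewrite /seg_cost; apply: leq_trans (_ : \sum_(a <= j < b) 1 <= _).
  by apply: leq_sum => j _; apply: leq_b1.
by rewrite sum_nat_const_nat muln1.
Qed.

End SegLemmas.

Section Real.
Variables (SI SO Q : finType) (A : pac Q (SI * SO)%type).
Variables (tau : seq SI -> SO) (f : nat -> nat) (l : nat).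
Hypothesis Hf : delay_fun f.
Hypothesis Hwin : forall (u : nat -> seq SI) (v : nat -> SO),
      (forall i, size (u i) = f i) ->
      (forall i, v i = tau (flatten [seq u l | l <- iota 0 i.+1])) ->
      forall w, outcome u v w -> lang A w.
Hypothesis Hl : #|{set Q * Summ Q}| <= l.
Hypothesis Hl0 : 0 < l.
Variables (g : nat -> nat) (u : nat -> seq SI) (v : nat -> SO) (w : nat -> SI * SO).
Hypothesis Hg0 : g 0 = 2 * l.
Hypothesis Hgc : constant_delay g.
Hypothesis Hsz : forall i, size (u i) = g i.
Hypothesis Hv : forall i, v i = sigma A tau f l (flatten [seq u t | t <- iota 0 i.+1]).
Hypothesis Hout : outcome u v w.

Local Notation flat j := (flatten [seq u t | t <- iota 0 j.+1]).
Definition X j := (w j).1.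

Lemma size_flat j : size (flat j) = 2 * l + j.
Proof.
elim: j => [|j IH]; first by rewrite /= cats0 Hsz Hg0 addn0.
have -> : iota 0 j.+2 = iota 0 j.+1 ++ [:: j.+1] by rewrite -addn1 iotaD.
by rewrite map_cat flatten_cat size_cat IH /= cats0 Hsz Hgc // addn1 addnS.
Qed.

Lemma flat_prefix j j' : j <= j' -> exists r, flat j' = flat j ++ r.
Proof.
move=> H; rewrite (_ : j'.+1 = j.+1 + (j' - j)); last by lia.
by rewrite iotaD map_cat flatten_cat; eexists.
Qed.

Lemma flat_nth j t x : t < size (flat j) -> nth x (flat j) t = X t.
Proof.
move=> Ht.
have Htt : t < size (flat t) by rewrite size_flat; lia.
have HX : X t = nth (X t) (flat t) t := (Hout t).2.
case: (leqP t j) => H.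
  have [r ->] := flat_prefix H.
  by rewrite nth_cat Htt HX; apply: set_nth_default.
have [r Hr] := flat_prefix (ltnW H).
by rewrite HX Hr nth_cat Ht; apply: set_nth_default.
Qed.

Lemma flat_mkseq j : flat j = mkseq X (2 * l + j).
Proof.
apply: (@eq_from_nth _ (X 0)); first by rewrite size_flat size_mkseq.
by move=> t Ht; rewrite flat_nth // nth_mkseq // -size_flat.
Qed.

Definition XB t := [seq X p | p <- iota (t * l) l].

Lemma size_XB t : size (XB t) = l.
Proof. by rewrite size_map size_iota. Qed.

Lemma sb_XB n t : t.+1 * l <= n -> sb l (mkseq X n) t = XB t.
Proof.
move=> H; rewrite /sb /mkseq -map_drop -map_take drop_iota take_iota add0n /XB.
by congr map; congr iota; rewrite mulSn in H; lia.
Qed.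

Lemma v_eq j : v j = nth (tau [::]) (alpha A tau f XB (X 0) (j %/ l)) (j %% l).
Proof.
rewrite Hv flat_mkseq.
set s := mkseq X (2 * l + j).
have Hn : 2 * l + j = (2 * l + j).-1.+1 by lia.
have Es : s = X 0 :: behead s by rewrite /s Hn.
have Hs : size s = 2 * l + j by rewrite size_mkseq.
rewrite Es /sigma -Es Hs addKn.
congr nth; apply: alpha_ext => t Ht; apply: sb_XB.
have := leq_trunc_div j l; rewrite mulSn; nia.
Qed.

Lemma w_eq p : w p = (X p, v p).
Proof. by rewrite /X -(Hout p).1; case: (w p). Qed.

Lemma real_block i : size (alpha A tau f XB (X 0) i) = l ->
  [seq w p | p <- iota (i * l) l] = zip (XB i) (alpha A tau f XB (X 0) i).
Proof.
move=> Hs; apply: (@eq_from_nth _ (X 0, v 0)).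
  by rewrite size_map size_iota size_zip size_XB Hs minnn.
move=> r; rewrite size_map size_iota => Hr.
rewrite (nth_map 0) ?size_iota // nth_iota // nth_zip ?size_XB ?Hs //.
rewrite w_eq v_eq /XB (nth_map 0) ?size_iota // nth_iota //.
rewrite divnMDl // modnMDl divn_small // modn_small // addn0.
by rewrite (set_nth_default (tau [::])) // Hs.
Qed.

Local Notation Wsim := (Ww A tau f XB (X 0)).
Local Notation YP := (Ypos A f XB).
Local Notation YB := (yb A f XB).

Lemma states i : run_state A w (i * l) = run_state A Wsim (YP i) /\
  blk A w (i * l) l = blk A Wsim (YP i) (size (YB i)).
Proof.
have step : forall i, run_state A w (i * l) = run_state A Wsim (YP i) ->
    blk A w (i * l) l = blk A Wsim (YP i) (size (YB i)).
  move=> k Hk; have [Hs Hal] := alpha_spec A tau f Hl Hl0 size_XB (X 0) k.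
  by rewrite /blk real_block // Hk.
elim: i => [|i [IH1 IH2]]; first by split; [| apply: step].
have E : run_state A w (i.+1 * l) = run_state A Wsim (YP i.+1).
  by rewrite mulSnr -sem1 IH2 sem1 YposS.
by split => //; apply: step.
Qed.

Lemma R1 a b : a <= b ->
  seg_cost A w (a * l) (b * l) <= l * \sum_(a <= j < b) (sinc (blk A w (j * l) l) : nat).
Proof.
elim: b => [|b IH]; first by rewrite leqn0 => /eqP ->; rewrite /seg_cost big_geq.
rewrite leq_eqVlt => /orP [/eqP ->|H]; first by rewrite /seg_cost big_geq.
rewrite ltnS in H.
have Hab : a * l <= b * l by apply: leq_mul.
have Hbb : b * l <= b.+1 * l by rewrite mulSnr leq_addr.
rewrite (@seg_split _ _ A w _ (b * l)) // big_nat_recr //= mulnDr leq_add // ?IH //.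
rewrite mulSnr sem2.
have := seg_le A w (b * l) (b * l + l).
case: (seg_cost _ _ _ _) => [|c] Hc //=.
by rewrite muln1; move: Hc; rewrite addKn.
Qed.

Lemma R2 a b : a <= b ->
  \sum_(a <= j < b) (sinc (blk A Wsim (YP j) (size (YB j))) : nat) <= seg_cost A Wsim (YP a) (YP b).
Proof.
elim: b => [|b IH]; first by rewrite leqn0 => /eqP ->; rewrite big_geq.
rewrite leq_eqVlt => /orP [/eqP ->|H]; first by rewrite big_geq.
rewrite ltnS in H.
have H1 : YP a <= YP b by apply: (Ypos_mono A f Hl Hl0 size_XB).
have H2 : YP b <= YP b.+1 by apply: ltnW; apply: (Ypos_lt A f Hl Hl0 size_XB).
rewrite big_nat_recr //= (@seg_split _ _ A Wsim _ (YP b)) //.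
rewrite leq_add // ?IH // sem2 -YposS.
by case: (seg_cost _ _ _ _).
Qed.

Lemma real_lang : lang A w.
Proof.
have [B0 [N0 HW]] := W_lang Hf Hl Hl0 XB (X 0) Hwin.
exists (l * (B0 + 2)), (N0 * l) => m Hm.
rewrite /cor_le.
case Hodd: (odd (Omega A (run_state A w m))); last by left.
right.
set i := m %/ l.
have Hmi : i * l <= m < i * l + l.
  rewrite /i {2 3}(divn_eq m l) leq_addr /= ltn_add2l ltn_pmod //.
have HiN : N0 <= i by rewrite /i -(mulnK N0 Hl0) leq_div2r.
have [_ HP2] := semP A w (i * l) l.
case: (HP2 m Hmi Hodd) => [[t' [Ht'1 Ht'2 Ht'3]] | [p [Hp1 Hp2]]].
  exists t'; split => //; first by case/andP: Ht'1.
  have H1 := seg_le A w m t'.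
  have H2 : l <= l * (B0 + 2) by apply: leq_pmulr; rewrite addn2.
  case/andP: Ht'1 => ? ?; lia.
have [Hst Hblk] := states i.
rewrite Hblk in Hp1.
have [HP1 _] := semP A Wsim (YP i) (size (YB i)).
have [n [Hn1 Hn2 Hn3 Hn4]] := HP1 p Hp1.
have HnN : N0 <= n.
  apply: leq_trans HiN _; apply: leq_trans (Ypos_ge A f Hl Hl0 size_XB i) _.
  by case/andP: Hn1.
have HYi : YP i + size (YB i) = YP i.+1 by rewrite YposS.
rewrite HYi in Hn1 Hn4.
case: (HW n HnN) => [Hev | [n' [Hnn' Hev' Hlt' Hcost]]].
  by move: Hev; rewrite Hn2 Hn3.
have Hn'big : YP i.+1 <= n'.
  rewrite leqNgt; apply/negP => Hc.
  have := Hn4 n' (ltac:(lia)) Hev'; rewrite -Hn2; lia.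
have [i' /andP [Hi'1 Hi'2]] := Ypos_block A f Hl Hl0 size_XB n'.
have Hii' : i < i'.
  rewrite ltnNge; apply/negP => Hc.
  have Hc' : i'.+1 <= i.+1 by [].
  have := Ypos_mono A f Hl Hl0 size_XB Hc'; lia.
have [_ HE2] := semE A Wsim (YP i') (size (YB i')).
have [e [He1 He2]] := HE2 n' (ltac:(rewrite YposS in Hi'2; lia)) Hev'.
have [_ Hblk'] := states i'.
rewrite -Hblk' in He1.
have [HE1 _] := semE A w (i' * l) l.
have [m' [Hm'1 Hm'2 Hm'3]] := HE1 e He1.
have Hord : i.+1 * l <= i' * l by rewrite leq_mul2r Hii' orbT.
have E1 : i.+1 * l = i * l + l by rewrite mulSnr.
have E2 : i'.+1 * l = i' * l + l by rewrite mulSnr.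
exists m'; split.
- lia.
- by rewrite Hm'2.
- rewrite Hm'2; apply: leq_ltn_trans Hp2 _; rewrite -Hn2; apply: leq_trans Hlt' He2.
- apply: leq_trans (_ : seg_cost A w (i * l) (i'.+1 * l) <= _).
    apply: seg_mono; lia.
  apply: leq_trans (R1 (ltnW (leq_trans Hii' (leqnSn _)))) _.
  rewrite big_ltn ?(leq_trans Hii') // big_nat_recr //=.
  rewrite leq_mul2l; apply/orP; right.
  have Es : \sum_(i.+1 <= j < i') (sinc (blk A w (j * l) l) : nat) =
            \sum_(i.+1 <= j < i') (sinc (blk A Wsim (YP j) (size (YB j))) : nat).
    by apply: eq_big_nat => j _; rewrite (states j).2.
  rewrite Es.
  have H2 := R2 Hii'.
  have H3 : seg_cost A Wsim (YP i.+1) (YP i') <= seg_cost A Wsim n n'.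
    apply: seg_mono => //; first by case/andP: Hn1 => _ /ltnW.
    apply: (Ypos_mono A f Hl Hl0 size_XB); lia.
  have := leq_b1 (sinc (blk A w (i * l) l)); have := leq_b1 (sinc (blk A w (i' * l) l)).
  lia.
Qed.

End Real.

Lemma ncolors_ge2 (Sig Q : finType) (A : pac Q Sig) :
  has_even_and_odd_color A -> 2 <= ncolors A.
Proof.
move=> [[q1 H1] [q2 H2]].
have Hne : Omega A q1 != Omega A q2.
  by apply/eqP => E; move: H2; rewrite -E H1.
rewrite /ncolors.
have -> : 2 = size [:: Omega A q1; Omega A q2] by [].
apply: uniq_leq_size; first by rewrite /= inE Hne.
move=> c; rewrite !inE => /orP [] /eqP ->; rewrite mem_undup; apply: map_f; exact: mem_enum.
Qed.

Theorem corollary2 (SI SO Q : finType) (A : pac Q (SI * SO)%type) :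
  has_even_and_odd_color A ->
  (exists f, delay_fun f /\ winsO f (lang A)) ->
  forall g : nat -> nat,
    delay_fun g -> constant_delay g ->
    g 0 = 2 ^ (2 * nstates Q ^ 4 * ncolors A ^ 2 + 1) ->
    winsO g (lang A).
Proof.
move=> Heo [f [Hf [tau Hwin]]] g Hg Hgc Hg0.
set l := 2 ^ (2 * nstates Q ^ 4 * ncolors A ^ 2).
have Hg0' : g 0 = 2 * l by rewrite Hg0 addn1 expnS.
have Hl0 : 0 < l by rewrite expn_gt0.
have Hk := ncolors_ge2 Heo.
have Hn : 0 < nstates Q by rewrite /nstates; apply/card_gt0P; exists (qI A).
have Hl : #|{set Q * Summ Q}| <= l.
  rewrite card_cls /l leq_exp2l // -/(nstates Q).
  set n := nstates Q; set k := ncolors A.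
  have h1 : n.+1 <= n * k by nia.
  have h2 := leq_mul h1 h1.
  nia.
exists (sigma A tau f l) => u v Hsz Hv w Hout.
exact: (real_lang Hf Hwin Hl Hl0 Hg0' Hgc Hsz Hv Hout).
Qed.
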